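(* Let $G$ be a finite group of order $n$, let $f:G\to\mathbb{Q}$ be a class function with $f(g)=f(g^{-1})$ for all $g\in G$, and let $\Gamma_f=\operatorname{Cay}(G,f)$ be the Cayley colour graph. Let $K$ be a field with $\mathbb{Q}\subseteq K\subseteq\mathbb{Q}(\zeta_n)$ and $H_K=\eta(\operatorname{Gal}(\mathbb{Q}(\zeta_n)/K))\le\mathbb{Z}_n^*$. Then all eigenvalues of $\Gamma_f$ lie in $K$ if and only if $f^h=f$ for all $h\in H_K$.
   Context: $\zeta_n=e^{2\pi i/n}$; $\mathbb{Z}_n^*$ is the unit group of $\mathbb{Z}/n\mathbb{Z}$; $\eta:\operatorname{Gal}(\mathbb{Q}(\zeta_n)/\mathbb{Q})\to\mathbb{Z}_n^*$ is the isomorphism with $\sigma(\zeta_n)=\zeta_n^{\eta(\sigma)}$. A class function is a function constant on conjugacy classes. For $h\in\mathbb{Z}_n^*$, $f^h:G\to\mathbb{C}$ is $f^h(g)=f(g^h)$. The Cayley colour graph $\Gamma_f=\operatorname{Cay}(G,f)$ has vertex set $G$ and adjacency matrix $A(\Gamma_f)=[f(gh^{-1})]_{g,h\in G}$ (a real symmetric matrix); the eigenvalues of $\Gamma_f$ are the eigenvalues of this matrix. *)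

(* Defs.v *)
From HB Require Import structures.
From mathcomp Require Import all_boot all_order all_algebra all_fingroup all_field.
Set Implicit Arguments. Unset Strict Implicit. Unset Printing Implicit Defensive.
Import GRing.Theory Num.Theory.
Local Open Scope ring_scope.

(* Complex numbers are modelled by algC (algebraic closure of Q inside C);
   all eigenvalues of a rational matrix are algebraic, so nothing is lost. *)

Definition in_Qz (z x : algC) : Prop :=
  exists p : {poly rat}, x = (map_poly ratr p).[z].

Definition is_subfield (K : algC -> Prop) : Prop :=
  [/\ K 0, K 1,
      (forall x y, K x -> K y -> K (x - y)),
      (forall x y, K x -> K y -> K (x * y)) &
      (forall x, K x -> x != 0 -> K x^-1)].

Definition Qz_aut (z : algC) (s : algC -> algC) : Prop :=
  [/\ (forall x, in_Qz z x -> in_Qz z (s x)),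
      (forall y, in_Qz z y -> exists2 x, in_Qz z x & s x = y),
      (forall x y, in_Qz z x -> in_Qz z y -> s (x + y) = s x + s y),
      (forall x y, in_Qz z x -> in_Qz z y -> s (x * y) = s x * s y) &
      s 1 = 1].

Definition in_Gal (z : algC) (K : algC -> Prop) (s : algC -> algC) : Prop :=
  Qz_aut z s /\ (forall x, K x -> s x = x).

(* h (a representative of a class in Z_n^* ) lies in H_K = eta(Gal(Q(z)/K)) *)
Definition in_HK (n : nat) (z : algC) (K : algC -> Prop) (h : nat) : Prop :=
  coprime h n /\ exists s, in_Gal z K s /\ s z = z ^+ h.

Definition cayley_adj (gT : finGroupType) (f : gT -> rat) : 'M[algC]_#|gT| :=
  \matrix_(i, j) ratr (f (enum_val i * (enum_val j)^-1)%g).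

(* Main.v *)
Require Import Defs.
From Stdlib Require Classical_Prop.
From HB Require Import structures.
From mathcomp Require Import all_boot all_order all_algebra all_fingroup all_solvable all_field all_character.
From mathcomp Require Import zify ring.
Import GRing.Theory Num.Theory.
Set Implicit Arguments. Unset Strict Implicit. Unset Printing Implicit Defensive.
Local Open Scope ring_scope.

Section SubField.
Variable K : algC -> Prop.
Hypothesis hK : is_subfield K.

Lemma sfK0 : K 0. Proof. by case: hK. Qed.
Lemma sfK1 : K 1. Proof. by case: hK. Qed.
Lemma sfKB x y : K x -> K y -> K (x - y). Proof. by case: hK => _ _ H _ _; apply: H. Qed.
Lemma sfKM x y : K x -> K y -> K (x * y). Proof. by case: hK => _ _ _ H _; apply: H. Qed.
Lemma sfKV x : K x -> K x^-1.
Proof.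
case: hK => _ _ _ _ H Kx; have [->|nz] := eqVneq x 0; last exact: H.
by rewrite invr0; apply: sfK0.
Qed.
Lemma sfKN x : K x -> K (- x).
Proof. by move=> Kx; rewrite -sub0r; apply: sfKB => //; apply: sfK0. Qed.
Lemma sfKD x y : K x -> K y -> K (x + y).
Proof. by move=> Kx Ky; rewrite -(opprK y); apply: sfKB => //; apply: sfKN. Qed.
Lemma sfKn m : K m%:R.
Proof. elim: m => [|m IH]; first exact: sfK0. by rewrite -addn1 natrD; apply: sfKD => //; apply: sfK1. Qed.
Lemma sfKz (m : int) : K m%:~R.
Proof. case: m => m; first exact: sfKn. by rewrite NegzE mulrNz; apply: sfKN; apply: sfKn. Qed.
Lemma sfKrat (c : rat) : K (ratr c).
Proof. by rewrite /ratr; apply: sfKM; [apply: sfKz | apply: sfKV; apply: sfKz]. Qed.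
Lemma sfKsum I r (P : pred I) (F : I -> algC) :
  (forall i, P i -> K (F i)) -> K (\sum_(i <- r | P i) F i).
Proof. by move=> H; apply: big_ind => //; [apply: sfK0 | apply: sfKD]. Qed.
End SubField.
Section Qz.
Variable z : algC.

Lemma inQz_ratr c : in_Qz z (ratr c).
Proof. by exists c%:P; rewrite map_polyC hornerC. Qed.
Lemma inQz_z : in_Qz z z.
Proof. by exists 'X; rewrite map_polyX hornerX. Qed.
Lemma inQz_D x y : in_Qz z x -> in_Qz z y -> in_Qz z (x + y).
Proof. by move=> [p ->] [q ->]; exists (p + q); rewrite rmorphD hornerD. Qed.
Lemma inQz_M x y : in_Qz z x -> in_Qz z y -> in_Qz z (x * y).
Proof. by move=> [p ->] [q ->]; exists (p * q); rewrite rmorphM hornerM. Qed.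
Lemma inQz_X x k : in_Qz z x -> in_Qz z (x ^+ k).
Proof.
move=> Hx; elim: k => [|k IH]; first by rewrite expr0; exists 1; rewrite rmorph1 hornerC.
by rewrite exprS; apply: inQz_M.
Qed.
Lemma inQz_horner y (q : {poly rat}) : in_Qz z y -> in_Qz z ((map_poly ratr q).[y]).
Proof.
move=> Hy; elim/poly_ind: q => [|q c IH]; first by rewrite rmorph0 horner0; exists 0; rewrite rmorph0 horner0.
rewrite rmorphD rmorphM /= map_polyX map_polyC hornerD hornerMX hornerC.
by apply: inQz_D; [apply: inQz_M | apply: inQz_ratr].
Qed.

Lemma inQz_0 : in_Qz z 0.
Proof. by exists 0; rewrite rmorph0 horner0. Qed.
Lemma inQz_sum I r (P : pred I) (F : I -> algC) :
  (forall i, P i -> in_Qz z (F i)) -> in_Qz z (\sum_(i <- r | P i) F i).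
Proof. by move=> H; apply: big_ind => //; [apply: inQz_0 | apply: inQz_D]. Qed.

Variable K : algC -> Prop.
Hypothesis hK : is_subfield K.

Lemma Gal_horner s (p : {poly rat}) : in_Gal z K s ->
  s ((map_poly ratr p).[z]) = (map_poly ratr p).[s z].
Proof.
rewrite /in_Gal /Qz_aut; case=> [[_ _ sD sM _] sK].
elim/poly_ind: p => [|q c IH]; first by rewrite rmorph0 !horner0; apply: sK; apply: sfK0.
rewrite rmorphD rmorphM /= map_polyX map_polyC !hornerD !hornerMX !hornerC.
have Hq : in_Qz z (map_poly ratr q).[z] by exists q.
have Hz := inQz_z.
rewrite (sD _ _ (inQz_M Hq Hz) (inQz_ratr c)) (sM _ _ Hq Hz) IH.
by rewrite (sK _ (sfKrat hK c)).
Qed.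

Lemma Aut_horner (u : {rmorphism algC -> algC}) (p : {poly rat}) :
  u ((map_poly ratr p).[z]) = (map_poly ratr p).[u z].
Proof.
rewrite -horner_map -map_poly_comp; congr (_.[_]); apply: eq_map_poly => c /=.
exact: fmorph_rat.
Qed.
End Qz.
Section NF.
Variable Qn : splittingFieldType rat.
Hypothesis galQn : galois 1 {:Qn}.
Variable QnC : {rmorphism Qn -> algC}.
Hypothesis ext : forall nuQn : gal_of {:Qn},
  {nu : {rmorphism algC -> algC} | {morph QnC : a / nuQn a >-> nu a}}.
Variables (n : nat) (w : Qn).
Hypothesis prim_w : n.-primitive_root w.
Hypothesis genQn : <<1; w>>%VS = fullv.
Variable z : algC.
Hypothesis hz : n.-primitive_root z.

Lemma QnC_alg c : QnC c%:A = ratr c.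
Proof. exact: (fmorph_eq_rat (QnC \o in_alg Qn) c). Qed.

Lemma inQz_QnC x : in_Qz z x <-> exists a, x = QnC a.
Proof.
have pw : n.-primitive_root (QnC w) by rewrite fmorph_primitive_root.
split.
  case=> p ->.
  have [k Dz] := prim_rootP pw (prim_expr_order hz).
  exists ((map_poly (in_alg Qn) p).[w ^+ k]).
  rewrite -horner_map rmorphXn /= -Dz -map_poly_comp; congr (_.[_]).
  by apply: eq_map_poly => c /=; rewrite QnC_alg.
case=> a ->.
have aw : a \in <<1; w>>%VS by rewrite genQn memvf.
have [q Dq] := polyOver1P (Fadjoin_polyOver 1 w a).
rewrite -(Fadjoin_poly_eq aw) Dq -horner_map -map_poly_comp.
have [k Dw] := prim_rootP hz (prim_expr_order pw).
rewrite Dw (_ : map_poly _ q = map_poly ratr q); last first.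
  by apply: eq_map_poly => c /=; rewrite QnC_alg.
by apply: inQz_horner; apply: inQz_X; apply: inQz_z.
Qed.

Lemma inQz_V x : in_Qz z x -> in_Qz z x^-1.
Proof.
move/inQz_QnC => [a ->]; apply/inQz_QnC; exists a^-1; by rewrite fmorphV.
Qed.

Lemma Gal_pow K (hK : is_subfield K) s : in_Gal z K s ->
  exists k, coprime k n /\ s z = z ^+ k.
Proof.
move=> sG; have sG' := sG; case: sG' => [[sQ _ sD sM s1] sK].
have n_gt0 : (0 < n)%N := prim_order_gt0 hz.
have sX m : s (z ^+ m) = s z ^+ m.
  by have := Gal_horner hK ('X^m) sG; rewrite map_polyXn !hornerXn.
have sXn : s z ^+ n = 1 by rewrite -sX (prim_expr_order hz).
have [k Dk] := prim_rootP hz sXn; exists k; split => //.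
have sinj x : in_Qz z x -> s x = 1 -> x = 1.
  move=> Qx sx1; apply/eqP; apply/negPn/negP => ne.
  have Q1 : in_Qz z (-1) by have := inQz_ratr z (-1); rewrite rmorphN1.
  have Qy : in_Qz z (x - 1) by apply: inQz_D.
  have sy : s (x - 1) = 0.
    rewrite sD //; rewrite sx1 sK; first by rewrite subrr.
    by apply: sfKN => //; apply: sfK1.
  have Qyi := inQz_V Qy.
  have := sM _ _ Qy Qyi; rewrite sy mul0r mulfV ?subr_eq0 // s1 => /eqP.
  by rewrite oner_eq0.
set d := gcdn k n.
have d_gt0 : (0 < d)%N by rewrite gcdn_gt0 n_gt0 orbT.
have /dvdnP [q Dn] : (d %| n)%N by apply: dvdn_gcdr.
have Dq : (n %/ d)%N = q by rewrite Dn mulnK.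
have km : (k * q = k %/ d * n)%N.
  by rewrite -Dq (muln_divA _ (dvdn_gcdr k n)) (divn_mulAC _ (dvdn_gcdl k n)).
have zq : z ^+ q = 1.
  apply: sinj; first by apply: inQz_X; apply: inQz_z.
  by rewrite sX Dk -exprM km mulnC exprM (prim_expr_order hz) expr1n.
have : (n %| q)%N by rewrite (prim_order_dvd hz) zq.
have q_gt0 : (0 < q)%N by move: n_gt0; rewrite Dn muln_gt0 => /andP[].
rewrite /coprime -/d => /(dvdn_leq q_gt0) H; clear -n_gt0 Dn d_gt0 q_gt0 H.
apply/eqP; nia.
Qed.
End NF.
Section Corr.
Variable Qn : splittingFieldType rat.
Hypothesis galQn : galois 1 {:Qn}.
Variable QnC : {rmorphism Qn -> algC}.
Hypothesis ext : forall nuQn : gal_of {:Qn},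
  {nu : {rmorphism algC -> algC} | {morph QnC : a / nuQn a >-> nu a}}.
Variables (n : nat) (w : Qn).
Hypothesis prim_w : n.-primitive_root w.
Hypothesis genQn : <<1; w>>%VS = fullv.
Variable z : algC.
Hypothesis hz : n.-primitive_root z.
Variable K : algC -> Prop.
Hypothesis hK : is_subfield K.
Hypothesis hKQz : forall x, K x -> in_Qz z x.

Let P (a : Qn) := K (QnC a).

Lemma exists_span : exists s : seq Qn,
  (forall y, y \in s -> P y) /\ (forall a, P a -> a \in <<s>>%VS).
Proof.
suff: forall m (s : seq Qn), (\dim {:Qn} - \dim <<s>>%VS <= m)%N ->
   (forall y, y \in s -> P y) -> exists s' : seq Qn,
  (forall y, y \in s' -> P y) /\ (forall a, P a -> a \in <<s'>>%VS).
  by move/(_ _ [::] (leqnn _)); apply=> y.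
elim=> [|m IH] s hm hs.
  case: (Classical_Prop.classic (exists a, P a /\ a \notin <<s>>%VS)) => [[a [Pa na]]|H].
    suff: (<<s>> == fullv)%VS by move/eqP=> e; rewrite e memvf in na.
    by rewrite eqEdim subvf /= -subn_eq0 -leqn0.
  exists s; split => // a Pa; have [//|na] := boolP (a \in <<s>>%VS); exfalso; apply: H; by exists a.
case: (Classical_Prop.classic (exists a, P a /\ a \notin <<s>>%VS)) => [[a [Pa na]]|H]; last first.
  exists s; split => // a Pa; have [//|na] := boolP (a \in <<s>>%VS); exfalso; apply: H; by exists a.
apply: (IH (a :: s)); last by move=> y; rewrite inE => /orP[/eqP->|]; [|apply: hs].
have sub : (<<s>> <= <<a :: s>>)%VS by rewrite span_cons addvSr.
have lt : (\dim <<s>> < \dim <<a :: s>>)%N.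
  rewrite (ltn_leqif (dimv_leqif_sup sub)); apply/negP => /subvP H.
  by rewrite H ?memv_span ?mem_head in na.
have := dimvS (subvf <<a :: s>>%VS).
move: hm lt; clear; lia.
Qed.

Lemma P_span (s : seq Qn) : (forall y, y \in s -> P y) ->
  forall a, a \in <<s>>%VS -> P a.
Proof.
move=> hs a sa; rewrite (coord_span (X := in_tuple s) sa); rewrite /P rmorph_sum /=.
apply: sfKsum => // i _.
rewrite -mulr_algl rmorphM /= QnC_alg; apply: sfKM => //; first exact: sfKrat.
by apply: hs; rewrite mem_nth // size_tuple.
Qed.

Lemma fixed_inK x : in_Qz z x -> (forall s, in_Gal z K s -> s x = x) -> K x.
Proof.
have [s [hs hP]] := exists_span.
pose V := <<s>>%VS.
have memV a : a \in V <-> P a by split; [apply: P_span | apply: hP].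
have asp : is_aspace V.
  rewrite /is_aspace has_algid1 /=; last by apply/memV; rewrite /P rmorph1; apply: sfK1.
  by apply/prodvP => u v /memV Pu /memV Pv; apply/memV; rewrite /P rmorphM; apply: sfKM.
pose E := ASpace asp.
have galE : galois E {:Qn} by apply: galoisS galQn; rewrite sub1v subvf.
have /galois_fixedField fixE := galE.
move=> /(inQz_QnC QnC prim_w genQn hz) [a ->] H.
suff : a \in E by move/memV.
rewrite -fixE; apply/fixedFieldP; first exact: memvf.
move=> sg sgG; have [nu Hnu] := ext sg.
have fixs e : e \in E -> sg e = e.
  move=> eE; move: sgG; rewrite (gal_kHom _ (subvf E)) => /kHomP_tmp [fx _].
  exact: fx.
apply: (fmorph_inj QnC); rewrite Hnu; apply: H; split; last first.
  move=> k Kk; have [e De] := (inQz_QnC QnC prim_w genQn hz k).1 (hKQz Kk).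
  rewrite De -Hnu fixs //; apply/memV; rewrite /P -De //.
split.
- move=> y /(inQz_QnC QnC prim_w genQn hz) [b ->]; apply/(inQz_QnC QnC prim_w genQn hz).
  by exists (sg b); rewrite -Hnu.
- move=> y /(inQz_QnC QnC prim_w genQn hz) [b ->]; exists (QnC ((sg^-1)%g b)).
    by apply/(inQz_QnC QnC prim_w genQn hz); exists ((sg^-1)%g b).
  by rewrite -Hnu -galM ?memvf // mulVg gal_id.
- by move=> u v _ _; rewrite rmorphD.
- by move=> u v _ _; rewrite rmorphM.
- by rewrite rmorph1.
Qed.
End Corr.
Lemma tr_conj m (B : 'M[algC]_m) D : B \in unitmx -> \tr (invmx B *m D *m B) = \tr D.
Proof. by move=> uB; rewrite mxtrace_mulC mulmxA mulmxV // mul1mx. Qed.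

Lemma chi_aut (gT : finGroupType) (u : {rmorphism algC -> algC}) (h : nat) :
  (forall y, y ^+ #|gT| = 1 -> u y = y ^+ h) ->
  forall i (x : gT), u ('chi[[set: gT]]_i x) = 'chi[[set: gT]]_i (x ^+ h)%g.
Proof.
move=> hu i x; rewrite -irrRepr.
set rG := 'Chi_i.
have Gx : x \in [set: gT] := in_setT x.
have [e [[B uB DrG] [e1 _] [chix _] _]] := repr_rsim_diag rG Gx.
have Dk k : rG (x ^+ k)%g = invmx B *m diag_mx (\row_j e 0 j ^+ k) *m B.
  elim: k => [|k IH].
    rewrite expg0 repr_mx1 (_ : \row_j _ = const_mx 1); last by apply/rowP => j; rewrite !mxE expr0.
    by rewrite diag_const_mx mulmx1 mulVmx.
  rewrite expgS repr_mxM ?in_setT // IH DrG !mulmxA -[_ *m B *m invmx B]mulmxA mulmxV // mulmx1.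
  rewrite -(mulmxA (invmx B) (diag_mx e)) (mulmx_diag e); congr (_ *m diag_mx _ *m _).
  by apply/rowP => j; rewrite !mxE exprS.
rewrite chix cfunE in_setT mulr1n Dk tr_conj //.
rewrite mxtrace_diag rmorph_sum; apply: eq_bigr => j _; rewrite mxE; apply: hu.
have /dvdnP [q ->] : (#[x]%g %| #|gT|)%N by rewrite -cardsT order_dvdG.
by rewrite mulnC exprM e1 expr1n.
Qed.
Section Mats.
Variable gT : finGroupType.
Local Notation n := #|gT|.
Local Notation chi i := ('chi[[set: gT]]_i).

Lemma sum_enum (R : nmodType) (F : gT -> R) :
  \sum_(k < #|gT|) F (enum_val k) = \sum_y F y.
Proof. by rewrite -(big_enum_val F); apply: eq_bigl. Qed.

Definition cmx (phi : gT -> algC) : 'M[algC]_#|gT| :=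
  \matrix_(i, j) phi (enum_val i * (enum_val j)^-1)%g.
Definition conv (phi psi : gT -> algC) (g : gT) : algC :=
  \sum_m phi m * psi (m^-1 * g)%g.

Lemma cmx_mul phi psi : cmx phi *m cmx psi = cmx (conv phi psi).
Proof.
apply/matrixP => a b; rewrite !mxE /conv; under eq_bigr do rewrite !mxE.
rewrite (sum_enum (fun y : gT => phi (enum_val a * y^-1)%g * psi (y * (enum_val b)^-1)%g)).
rewrite (reindex_inj (inj_comp (mulIg (enum_val a)) (@invg_inj gT))) /=.
apply: eq_bigr => m _; congr (phi _ * psi _).
  by rewrite invMg invgK mulKVg.
by rewrite mulgA.
Qed.

Lemma n_neq0 : (n%:R : algC) != 0.
Proof. by rewrite pnatr_eq0 -lt0n; apply/card_gt0P; exists 1%g. Qed.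

Lemma conv_chi i j g : conv (chi i) (chi j) g = (i == j)%:R * (n%:R * chi j g / chi j 1%g).
Proof.
have := generalized_orthogonality_relation g j i.
rewrite cardsT eq_sym => /(congr1 (fun t => n%:R * t)); rewrite mulVKf ?n_neq0 // => H.
rewrite (_ : _ * _ = n%:R * ((i == j)%:R * (chi j g / chi j 1%g))); last by ring.
rewrite -H.
rewrite /conv (reindex_inj (@invg_inj gT)) /=.
rewrite [RHS]big_mkcond /=; apply: eq_bigr => x _; rewrite in_setT mulrC invgK //.
Qed.

Section Coef.
Variable phi : gT -> algC.
Hypothesis hJ : forall x y, phi (x ^ y)%g = phi x.

Lemma cls_proof : is_class_fun <<[set: gT]>>%g [ffun x => phi x].
Proof.
rewrite genGid; apply: intro_class_fun => [x y _ _| x]; first exact: hJ.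
by rewrite in_setT.
Qed.

Definition mkCF : 'CF([set: gT]) := Cfun 0 cls_proof.

Definition coef i := n%:R^-1 * \sum_x phi x * (chi i x)^*.
Definition lam i := n%:R * coef i / chi i 1%g.

Lemma coefE i : '[mkCF, chi i] = coef i.
Proof.
rewrite cfdotE cardsT /coef; congr (_ * _).
rewrite big_mkcond /=; apply: eq_bigr => x _; by rewrite in_setT cfunE.
Qed.

Lemma expand x : phi x = \sum_i coef i * chi i x.
Proof.
have := congr1 (fun psi : 'CF([set: gT]) => psi x) (cfun_sum_cfdot mkCF).
rewrite cfunE sum_cfunE => ->; apply: eq_bigr => i _; by rewrite cfunE coefE.
Qed.

Lemma conv_expL j g : conv phi (chi j) g = lam j * chi j g.
Proof.
transitivity (\sum_i coef i * conv (chi i) (chi j) g).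
  rewrite /conv; under eq_bigr => m _ do rewrite (expand m) mulr_suml.
  rewrite exchange_big; apply: eq_bigr => i _; rewrite mulr_sumr.
  by apply: eq_bigr => m _; rewrite mulrA.
under eq_bigr => i _ do rewrite conv_chi.
rewrite (bigD1 j) //= eqxx big1 ?addr0 => [|i /negbTE ->]; first by rewrite /lam /=; ring.
by rewrite mul0r mulr0.
Qed.

Lemma conv_expR j g : conv (chi j) phi g = lam j * chi j g.
Proof.
transitivity (\sum_i coef i * conv (chi j) (chi i) g).
  rewrite /conv; under eq_bigr => m _ do rewrite (expand (m^-1 * g)%g) mulr_sumr.
  rewrite exchange_big; apply: eq_bigr => i _; rewrite mulr_sumr.
  by apply: eq_bigr => m _; rewrite mulrCA.
under eq_bigr => i _ do rewrite conv_chi.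
rewrite (bigD1 j) //= eqxx big1 ?addr0 => [|i]; first by rewrite /lam /=; ring.
by rewrite eq_sym => /negbTE ->; rewrite mul0r mulr0.
Qed.

Lemma AE j : cmx phi *m cmx (chi j) = lam j *: cmx (chi j).
Proof. by rewrite cmx_mul; apply/matrixP => a b; rewrite !mxE conv_expL. Qed.

Lemma EA j : cmx (chi j) *m cmx phi = lam j *: cmx (chi j).
Proof. by rewrite cmx_mul; apply/matrixP => a b; rewrite !mxE conv_expR. Qed.
End Coef.

Lemma sumE : \sum_j chi j 1%g *: cmx (chi j) = n%:R *: 1%:M.
Proof.
apply/matrixP => a b; rewrite summxE; under eq_bigr do rewrite !mxE.
have := congr1 (fun psi : 'CF([set: gT]) => psi (enum_val a * (enum_val b)^-1)%g)
   (cfReg_sum [set: gT]%G).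
rewrite sum_cfunE cfRegE cardsT -eq_mulgV1 (inj_eq enum_val_inj) => H.
by rewrite !mxE mulr_natr H; apply: eq_bigr => i _; rewrite cfunE.
Qed.
End Mats.
Section Eig.
Variable gT : finGroupType.
Local Notation n := #|gT|.
Local Notation chi i := ('chi[[set: gT]]_i).
Variable phi : gT -> algC.
Hypothesis hJ : forall x y, phi (x ^ y)%g = phi x.

Lemma eig_lam j : eigenvalue (cmx phi) (lam phi j).
Proof.
apply/eigenvalueP; exists (row (enum_rank 1%g) (cmx (chi j))).
  by rewrite -row_mul (EA hJ); apply/rowP => k; rewrite !mxE.
apply/eqP => H; have := congr1 (fun v : 'rV_n => v 0 (enum_rank 1%g)) H.
rewrite !mxE enum_rankK mulgV => /eqP; by rewrite (negbTE (irr1_neq0 j)).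
Qed.

Lemma eig_is_lam a : eigenvalue (cmx phi) a -> exists j, a = lam phi j.
Proof.
move/eigenvalueP => [v Hv nz].
case: (boolP [exists j, v *m cmx (chi j) != 0]) => [/existsP [j nzj] | /existsPn H].
  exists j; apply/eqP; rewrite -subr_eq0; apply: contraLR nzj => ne; apply/negPn.
  have : (a - lam phi j) *: (v *m cmx (chi j)) = 0.
    by rewrite scalerBl scalemxAl -Hv -mulmxA (AE hJ) -scalemxAr subrr.
  by move/eqP; rewrite scaler_eq0 (negbTE ne).
exfalso; move/negP: nz; apply; apply/eqP.
have : n%:R *: v = 0.
  rewrite -[v in LHS]mulmx1 scalemxAr -sumE mulmx_sumr big1 // => j _.
  by rewrite -scalemxAr (eqP (negPn (H j))) scaler0.
by move/eqP; rewrite scaler_eq0 (negbTE (n_neq0 gT)) => /eqP.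
Qed.
End Eig.
Section Aut.
Variable gT : finGroupType.
Local Notation n := #|gT|.
Local Notation chi i := ('chi[[set: gT]]_i).
Variable u : {rmorphism algC -> algC}.
Variable h : nat.
Hypothesis hu : forall y, y ^+ n = 1 -> u y = y ^+ h.
Hypothesis cop : coprime n h.
Local Notation h' := (expg_invn [set: gT] h).

Lemma powK : cancel (fun x : gT => x ^+ h)%g (fun x : gT => x ^+ h')%g.
Proof. by move=> x; apply: expgK; rewrite ?cardsT ?in_setT. Qed.

Variable phi : gT -> algC.
Hypothesis hphi : forall x, u (phi x) = phi x.

Lemma coef_aut j : u (coef phi j) = coef (fun x => phi (x ^+ h')%g) j.
Proof.
rewrite /coef rmorphM fmorphV rmorph_nat rmorph_sum /=; congr (_ * _).
rewrite [RHS](reindex_inj (can_inj powK)) /=; apply: eq_bigr => x _.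
by rewrite rmorphM hphi powK -!irr_inv (chi_aut hu) expVgn.
Qed.

Lemma lam_aut j : u (lam phi j) = lam (fun x => phi (x ^+ h')%g) j.
Proof.
by rewrite /lam rmorphM rmorphM fmorphV rmorph_nat coef_aut (chi_aut hu) expg1n.
Qed.
End Aut.
Unset Implicit Arguments.
Theorem mainTheorem4 (gT : finGroupType) (f : gT -> rat) (z : algC)
  (K : algC -> Prop)
  (hz : #|gT|.-primitive_root z)
  (hclass : forall x y : gT, f (x ^ y)%g = f x)
  (hinv : forall x : gT, f (x^-1)%g = f x)
  (hK : is_subfield K)
  (hKQz : forall x, K x -> in_Qz z x) :
  (forall a : algC, eigenvalue (cayley_adj f) a -> K a) <->
  (forall h : nat, in_HK #|gT| z K h -> forall g : gT, f (g ^+ h)%g = f g).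
Proof.
have [Qn galQn [QnC ext [w [prim_w genQn] charval]]] := group_num_field_exists [set: gT]%G.
have prim_w' : #|gT|.-primitive_root w by rewrite -cardsT.
have ext' : forall nuQn : gal_of {:Qn},
  {nu : {rmorphism algC -> algC} | {morph QnC : a / nuQn a >-> nu a}} := ext.
pose fc := fun x => (ratr (f x) : algC).
have hJ : forall x y, fc (x ^ y)%g = fc x by move=> x y; rewrite /fc hclass.
have Adj : cayley_adj f = cmx fc by [].
have hu_rat (u : {rmorphism algC -> algC}) x : u (fc x) = fc x by apply: fmorph_rat.
have GalEq s k : in_Gal z K s -> s z = z ^+ k ->
    forall u : {rmorphism algC -> algC}, (forall y, y ^+ #|gT| = 1 -> u y = y ^+ k) ->
    forall x, in_Qz z x -> s x = u x.
  move=> sG sz u hu x [p ->].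
  by rewrite (Gal_horner hK p sG) Aut_horner sz hu // (prim_expr_order hz).
have fixlam k : coprime #|gT| k -> (forall g, f (g ^+ k)%g = f g) ->
    forall u : {rmorphism algC -> algC}, (forall y, y ^+ #|gT| = 1 -> u y = y ^+ k) ->
    forall j, u (lam fc j) = lam fc j.
  move=> cop' Hf u hu j; rewrite (lam_aut hu cop' (hu_rat u)).
  rewrite /lam /coef; congr (_ * (_ * _) / _); apply: eq_bigr => x _; congr (_ * _).
  have injs := can_inj (powK cop').
  have [y ->] : exists y, x = (y ^+ k)%g by exists (invF injs x); exact: (esym (f_invF injs x)).
  by rewrite /fc (powK cop') Hf.
split.
- move=> H k [cop [s [sG sz]]] g.
  have cop' : coprime #|gT| k by rewrite coprime_sym.
  have [u hu] := Qn_aut_exists cop.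
  have Hlam j : lam (fun x => fc (x ^+ expg_invn [set: gT] k)%g) j = lam fc j.
    rewrite -(lam_aut hu cop' (hu_rat u)).
    have Kl : K (lam fc j) by apply: H; rewrite Adj; apply: eig_lam.
    rewrite -(GalEq s k sG sz u hu _ (hKQz _ Kl)).
    by case: sG => _ sK; apply: sK.
  have hJt : forall x y, fc ((x ^ y) ^+ expg_invn [set: gT] k)%g = fc (x ^+ expg_invn [set: gT] k)%g.
    by move=> x y; rewrite -conjXg hJ.
  have Hc j : coef (fun x => fc (x ^+ expg_invn [set: gT] k)%g) j = coef fc j.
    have := Hlam j; rewrite /lam => /(mulIf (invr_neq0 (irr1_neq0 j))) /(mulfI (n_neq0 gT)).
    done.
  have Ht x : f (x ^+ expg_invn [set: gT] k)%g = f x.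
    apply: (fmorph_inj (ratr : {rmorphism rat -> algC})).
    change (fc (x ^+ expg_invn [set: gT] k)%g = fc x).
    have e1 := expand hJt x; have e2 := expand hJ x; simpl in e1.
    rewrite e1 e2.
    by apply: eq_bigr => i _; rewrite Hc.
  by rewrite -[in RHS](powK cop' g) Ht.
- move=> H a; rewrite Adj => /(eig_is_lam hJ) [j ->].
  have Qchi i y : in_Qz z ('chi[[set: gT]]_i y).
    have [b Db] := charval _ _ _ (irr_char i) y (order_dvdG (in_setT y)).
    by apply/(inQz_QnC QnC prim_w' genQn hz); exists b.
  have Qlam : in_Qz z (lam fc j).
    have Qn' : in_Qz z #|gT|%:R by rewrite -ratr_nat; apply: inQz_ratr.
    rewrite /lam /coef; apply: inQz_M; last by apply: (inQz_V QnC prim_w' genQn hz).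
    apply: inQz_M => //; apply: inQz_M; first exact: (inQz_V QnC prim_w' genQn hz).
    apply: inQz_sum => x _; apply: inQz_M; first exact: inQz_ratr.
    by rewrite -irr_inv.
  apply: (fixed_inK galQn ext' prim_w' genQn hz hK hKQz Qlam) => s sG.
  have [k [cop sz]] := Gal_pow QnC prim_w' genQn hz hK sG.
  have cop' : coprime #|gT| k by rewrite coprime_sym.
  have [u hu] := Qn_aut_exists cop.
  rewrite (GalEq s k sG sz u hu _ Qlam); apply: (fixlam k cop' _ u hu).
  by apply: H; split => //; exists s.
Qed.
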